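(* Let $f(z)=\sum_{k\ge0}\hat f(k)z^k$ be holomorphic on the unit disk with $\sum_{k\ge0}|\hat f(k)|<\infty$ and $f(0)\ne0$, and let $(\gamma_n)_{n\ge0}$ be an increasing sequence in $(0,\infty)$. Let $A=(a_{nk})_{n,k\ge0}$ be the lower-triangular matrix with $a_{nk}:=\gamma_n^{-1}\widehat{(1/f)}(n-k)$ for $0\le k\le n$ and $a_{nk}=0$ for $k>n$, where $\widehat{(1/f)}(m)$ denotes the $m$-th Taylor coefficient of $1/f$ at $0$. Then $A$ has a left inverse $B=(b_{jn})_{j,n\ge0}$ (i.e. $\sum_n|b_{jn}|<\infty$ for each $j$ and $\sum_n b_{jn}a_{nk}=\delta_{jk}$ for all $j,k$) which is lower-triangular and satisfies \[ \sum_{n\ge0}|b_{jn}|\asymp\gamma_j\quad(j\to\infty). \]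
   Context: $\asymp$ means each side is bounded by a constant multiple of the other, with constants independent of $j$. *)

(* Defs.v *)
From Stdlib Require Import Reals.
From Coquelicot Require Import Coquelicot.
Open Scope R_scope.

(* [inv_taylor fhat c]: c is the sequence of Taylor coefficients at 0 of 1/f,
   where f(z) = sum_k fhat k z^k with fhat 0 <> 0.  These are exactly the
   coefficients of the Cauchy-product inverse: (fhat * c)(m) = delta_{m0}. *)
Definition inv_taylor (fhat c : nat -> C) : Prop :=
  forall m : nat,
    sum_n (fun i => Cmult (fhat i) (c (m - i)%nat)) m
    = (if Nat.eqb m 0 then RtoC 1 else RtoC 0).

Definition matA (gamma : nat -> R) (c : nat -> C) (n k : nat) : C :=
  if Nat.leb k n then Cmult (RtoC (/ gamma n)) (c (n - k)%nat) else RtoC 0.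

(* Main.v *)
Require Import Defs.
From Stdlib Require Import Reals Lia Lra.
From Coquelicot Require Import Coquelicot.
Open Scope R_scope.

Lemma sum_n_tail_zero {G : AbelianMonoid} (a : nat -> G) (j m : nat) :
  (forall n, (j < n <= m)%nat -> a n = zero) -> (j <= m)%nat -> sum_n a m = sum_n a j.
Proof.
  intros Hz Hm. destruct (Nat.eq_dec j m) as [<-|Hne]; [reflexivity|].
  unfold sum_n. rewrite (sum_n_m_Chasles a 0 j m) by lia.
  rewrite (sum_n_m_ext_loc a (fun _ => zero) (S j) m).
  - rewrite sum_n_m_const_zero. apply plus_zero_r.
  - intros k Hk. apply Hz. lia.
Qed.

Lemma is_series_finite {K : AbsRing} {V : NormedModule K} (a : nat -> V) (j : nat) :
  (forall n, (j < n)%nat -> a n = zero) -> is_series a (sum_n a j).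
Proof.
  intros Hz. unfold is_series.
  apply filterlim_ext_loc with (fun _ => sum_n a j).
  - exists j. intros m Hm. symmetry. apply sum_n_tail_zero; auto. intros n Hn; apply Hz; lia.
  - apply filterlim_const.
Qed.

Lemma sum_n_rev {G : AbelianMonoid} (F : nat -> G) (j : nat) :
  sum_n (fun n => F (j - n)%nat) j = sum_n F j.
Proof.
  induction j as [|j IH].
  - rewrite !sum_O. reflexivity.
  - rewrite (sum_Sn F j). unfold sum_n in *. rewrite sum_Sn_m by lia.
    rewrite <- (sum_n_m_S (fun n => F (S j - n)%nat) 0 j).
    rewrite Nat.sub_0_r.
    rewrite (sum_n_m_ext (fun n => F (S j - S n)%nat) (fun n => F (j - n)%nat)) by (intros; f_equal).
    rewrite IH. apply plus_comm.
Qed.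

Lemma partial_le_series (a : nat -> R) (N : nat) :
  (forall n, 0 <= a n) -> ex_series a -> sum_n a N <= Series a.
Proof.
  intros Hp He. pose proof (Series_correct a He) as Hs.
  apply is_series_Reals in Hs. rewrite sum_n_Reals.
  apply sum_incr; auto.
Qed.

Theorem theorem3p3
  (fhat : nat -> C) (gamma : nat -> R) (c : nat -> C)
  (Hsum : ex_series (fun k => Cmod (fhat k)))
  (Hf0 : fhat 0%nat <> RtoC 0)
  (Hgpos : forall n, 0 < gamma n)
  (Hgincr : forall n m, (n <= m)%nat -> gamma n <= gamma m)
  (Hc : inv_taylor fhat c) :
  exists B : nat -> nat -> C,
    (forall j n, (j < n)%nat -> B j n = RtoC 0) /\
    (forall j, ex_series (fun n => Cmod (B j n))) /\
    (forall j k, is_series (fun n => Cmult (B j n) (matA gamma c n k))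
                           (if Nat.eqb j k then RtoC 1 else RtoC 0)) /\
    (exists c1 c2 : R, 0 < c1 /\ 0 < c2 /\ exists N : nat,
       forall j, (N <= j)%nat ->
         c1 * gamma j <= Series (fun n => Cmod (B j n)) <= c2 * gamma j).
Proof.
  set (B := fun j n => if Nat.leb n j then Cmult (fhat (j - n)%nat) (RtoC (gamma n)) else RtoC 0).
  assert (HBz : forall j n, (j < n)%nat -> B j n = RtoC 0).
  { intros j n H. unfold B. replace (Nat.leb n j) with false; [reflexivity|].
    symmetry. apply Nat.leb_gt. exact H. }
  assert (HBs : forall j, is_series (fun n => Cmod (B j n)) (sum_n (fun n => Cmod (B j n)) j)).
  { intros j. apply (is_series_finite (K := R_AbsRing) (V := R_NormedModule)). intros n Hn. rewrite HBz by exact Hn. apply Cmod_0. }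
  exists B. split; [exact HBz|]. split.
  { intros j. eexists. apply HBs. }
  split.
  - intros j k.
    set (G := fun n => if Nat.leb k (j - n) then Cmult (fhat n) (c (j - k - n)%nat) else RtoC 0).
    assert (Heq : sum_n (fun n => Cmult (B j n) (matA gamma c n k)) j = sum_n G j).
    { rewrite <- sum_n_rev. apply sum_n_ext_loc. intros n Hn.
      unfold B, G, matA.
      replace (Nat.leb (j - n) j) with true by (symmetry; apply Nat.leb_le; lia).
      replace (j - (j - n))%nat with n by lia.
      destruct (Nat.leb k (j - n)) eqn:E.
      - apply Nat.leb_le in E. replace (j - n - k)%nat with (j - k - n)%nat by lia.
        pose proof (Hgpos (j - n)%nat) as Hg.
        transitivity (Cmult (Cmult (fhat n) (RtoC (gamma (j - n)%nat * / gamma (j - n)%nat))) (c (j - k - n)%nat)).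
        + rewrite RtoC_mult. match goal with |- ?a = ?b => change (@eq C a b) end. ring.
        + rewrite Rinv_r by lra. match goal with |- ?a = ?b => change (@eq C a b) end. ring.
      - apply Cmult_0_r. }
    assert (Hfin : is_series (fun n => Cmult (B j n) (matA gamma c n k))
                     (sum_n (fun n => Cmult (B j n) (matA gamma c n k)) j)).
    { apply (is_series_finite (K := C_AbsRing) (V := C_NormedModule)). intros n Hn. rewrite HBz by exact Hn. apply Cmult_0_l. }
    rewrite Heq in Hfin.
    enough (E : sum_n G j = (if Nat.eqb j k then RtoC 1 else RtoC 0)) by (rewrite E in Hfin; exact Hfin).
    destruct (Nat.le_gt_cases k j) as [Hkj|Hkj].
    + rewrite (sum_n_tail_zero G (j - k) j).
      * rewrite (sum_n_ext_loc G (fun i => Cmult (fhat i) (c (j - k - i)%nat))).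
        -- rewrite Hc. destruct (Nat.eqb (j - k) 0) eqn:E1; destruct (Nat.eqb j k) eqn:E2;
             try reflexivity.
           ++ apply Nat.eqb_eq in E1. apply Nat.eqb_neq in E2. lia.
           ++ apply Nat.eqb_neq in E1. apply Nat.eqb_eq in E2. lia.
        -- intros n Hn. unfold G. replace (Nat.leb k (j - n)) with true; [reflexivity|].
           symmetry. apply Nat.leb_le. lia.
      * intros n Hn. unfold G. replace (Nat.leb k (j - n)) with false; [reflexivity|].
        symmetry. apply Nat.leb_gt. lia.
      * lia.
    + replace (Nat.eqb j k) with false by (symmetry; apply Nat.eqb_neq; lia).
      rewrite (sum_n_ext G (fun _ => zero)).
      * unfold sum_n. rewrite sum_n_m_const_zero. reflexivity.
      * intros n. unfold G. replace (Nat.leb k (j - n)) with false; [reflexivity|].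
        symmetry. apply Nat.leb_gt. lia.
  - exists (Cmod (fhat 0%nat)), (Series (fun k => Cmod (fhat k))).
    assert (Hc1 : 0 < Cmod (fhat 0%nat)) by (apply Cmod_gt_0; exact Hf0).
    assert (Hle : forall N, sum_n (fun k => Cmod (fhat k)) N <= Series (fun k => Cmod (fhat k))).
    { intros N. apply partial_le_series; [intros; apply Cmod_ge_0 | exact Hsum]. }
    split; [exact Hc1|]. split.
    { specialize (Hle 0%nat). rewrite sum_O in Hle. lra. }
    exists 0%nat. intros j _.
    rewrite (is_series_unique _ _ (HBs j)).
    set (h := fun n => Cmod (fhat n) * gamma (j - n)%nat).
    assert (Hh : sum_n (fun n => Cmod (B j n)) j = sum_n h j).
    { rewrite <- sum_n_rev. apply sum_n_ext_loc. intros n Hn. unfold B, h.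
      replace (Nat.leb (j - n) j) with true by (symmetry; apply Nat.leb_le; lia).
      replace (j - (j - n))%nat with n by lia.
      rewrite Cmod_mult, Cmod_R, Rabs_pos_eq; [reflexivity|].
      apply Rlt_le, Hgpos. }
    rewrite Hh. split.
    + unfold sum_n. rewrite sum_Sn_m by lia.
      assert (H0 : 0 <= sum_n_m h 1 j).
      { pose proof (sum_n_m_le (fun _ => 0) h 1 j) as Hs.
        rewrite sum_n_m_const, Rmult_0_r in Hs. apply Hs. intros k. unfold h.
        apply Rmult_le_pos; [apply Cmod_ge_0 | apply Rlt_le, Hgpos]. }
      unfold h at 1. rewrite Nat.sub_0_r. change (plus ?a ?b) with (a + b). lra.
    + apply Rle_trans with (sum_n (fun n => Cmod (fhat n) * gamma j) j).
      * apply sum_n_m_le. intros k. unfold h. apply Rmult_le_compat_l; [apply Cmod_ge_0|].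
        apply Hgincr. lia.
      * rewrite (sum_n_mult_r (K := R_Ring)). change (mult ?a ?b) with (a * b).
        apply Rmult_le_compat_r; [apply Rlt_le, Hgpos | apply Hle].
Qed.
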